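(* For any group $H$, the set $\mathcal E_H=\{G\in\mathcal G:\ H\text{ is embeddable into }\overline G\}$ is analytic in $\mathcal G$; therefore it is either meager or comeager in $\mathcal G$.
   Context: Let $\mathbb N=\{1,2,3,\dots\}$. Equip $\mathbb N^{\mathbb N\times\mathbb N}$ with the product topology of the discrete topology on $\mathbb N$. Let $\mathcal G$ be the (Polish) subspace consisting of those $A\in\mathbb N^{\mathbb N\times\mathbb N}$ that are the multiplication table of a group on the underlying set $\mathbb N$ whose identity element is $1$. For $G\in\mathcal G$, $\overline G$ denotes the group on $\mathbb N$ with multiplication table $G$. A subset of a Polish space $Y$ is analytic if it is a continuous image of a Borel subset of a Polish space. *)

(* Defs.v *)
From HB Require Import structures.
From mathcomp Require Import all_boot all_order all_algebra.
From mathcomp Require Import all_classical reals topology measure Rstruct.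

Set Implicit Arguments.
Unset Strict Implicit.
Unset Printing Implicit Defensive.
Import Order.TTheory GRing.Theory Num.Theory.
Local Open Scope classical_set_scope.
Local Open Scope ring_scope.

Definition complete_compatible_metric (P : topologicalType)
    (d : P -> P -> Rdefinitions.R) : Prop :=
  [/\ (forall x y, 0 <= d x y /\ (d x y = 0 <-> x = y)),
      (forall x y, d x y = d y x),
      (forall x y z, d x z <= d x y + d y z),
      (forall U : set P, open U <->
         (forall x, U x -> exists2 e : Rdefinitions.R, 0 < e &
            forall y, d x y < e -> U y)) &
      (forall u : nat -> P,
         (forall e : Rdefinitions.R, 0 < e ->
            exists N, forall m n, (N <= m)%N -> (N <= n)%N -> d (u m) (u n) < e) ->
         exists x, forall e : Rdefinitions.R, 0 < e ->
            exists N, forall n, (N <= n)%N -> d (u n) x < e)].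

Definition polish (P : topologicalType) : Prop :=
  (exists D : set P, countable D /\ closure D = setT) /\
  (exists d : P -> P -> Rdefinitions.R, complete_compatible_metric d).

Definition borel_set (P : topologicalType) (B : set P) : Prop :=
  <<s [set U : set P | open U] >> B.

Definition analytic (Y : topologicalType) (A : set Y) : Prop :=
  exists (P : topologicalType) (B : set P) (f : P -> Y),
    [/\ polish P, borel_set B, {within B, continuous f} & f @` B = A].

Definition nowhere_dense (T : topologicalType) (A : set T) : Prop :=
  interior (closure A) = set0.

Definition meager (T : topologicalType) (A : set T) : Prop :=
  exists F : nat -> set T, (forall n, nowhere_dense (F n)) /\
    A = \bigcup_n F n.

Definition comeager (T : topologicalType) (A : set T) : Prop :=
  meager (~` A).

(* Convention: the underlying set N = {1,2,3,...} is represented by nat,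
   the natural number k standing for k+1; so the identity element 1 is 0.
   N^(N x N) with the product of discrete topologies: *)
Definition table_space := {ptws (nat * nat) -> nat}.

Definition is_group_table (A : table_space) : Prop :=
  [/\ (forall x y z, A (A (x, y), z) = A (x, A (y, z))),
      (forall x, A (0%N, x) = x /\ A (x, 0%N) = x) &
      (forall x, exists y, A (x, y) = 0%N /\ A (y, x) = 0%N)].

Definition Gspace : topologicalType := set_type is_group_table.

Definition is_group (H : Type) (mul : H -> H -> H) (one : H) (inv : H -> H) :=
  [/\ (forall a b c, mul (mul a b) c = mul a (mul b c)),
      (forall a, mul one a = a /\ mul a one = a) &
      (forall a, mul (inv a) a = one /\ mul a (inv a) = one)].

Definition embeddable (H : Type) (mul : H -> H -> H) (G : Gspace) : Prop :=
  exists phi : H -> nat, injective phi /\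
    forall a b, phi (mul a b) = (set_val G) (phi a, phi b).

Definition E_set (H : Type) (mul : H -> H -> H) : set Gspace :=
  [set G | embeddable mul G].

(* Main.v *)
Require Import Defs.
From HB Require Import structures.
From mathcomp Require Import all_boot all_order all_algebra.
From mathcomp Require Import all_classical reals topology measure Rstruct.
From Stdlib Require Cantor PeanoNat.
From mathcomp Require Import zify.

Module ChunkA.
Set Implicit Arguments.
Unset Strict Implicit.
Unset Printing Implicit Defensive.
Import Order.TTheory GRing.Theory Num.Theory.
Local Open Scope classical_set_scope.

Section PtwsNat.
Context {U : topologicalType}.
Definition agree (lp : seq U) (g f : U -> nat) := forall p, p \in lp -> g p = f p.

Lemma ptws_nbhs (f : {ptws U -> nat}) (V : set {ptws U -> nat}) :
  nbhs f V -> exists lp : seq U, forall g, agree lp g f -> V g.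
Proof.
pose F := [set S : set {ptws U -> nat} | exists lp : seq U, forall g, agree lp g f -> S g].
have FF : Filter F.
  constructor.
  - by exists [::].
  - move=> P Q [l1 h1] [l2 h2]; exists (l1 ++ l2) => g hg; split.
      by apply: h1 => p hp; apply: hg; rewrite mem_cat hp.
    by apply: h2 => p hp; apply: hg; rewrite mem_cat hp orbT.
  - by move=> P Q PQ [l h]; exists l => g /h /PQ.
have : F `=>` nbhs f.
  apply/pointwise_cvgP => t W /=.
  rewrite nbhs_principalE => /principal_filterP Wt.
  by exists [:: t] => g hg; rewrite /= hg ?mem_head.
by move=> /(_ V) H /H.
Qed.

Lemma ptws_open_cyl (l : seq (U * nat)) :
  open [set g : {ptws U -> nat} | forall q, q \in l -> g q.1 = q.2].
Proof.
elim: l => [|[p v] l IH].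
  rewrite (_ : [set g | _] = setT); first exact: openT.
  by apply/seteqP; split => // g _ p.
rewrite (_ : [set g | _] = (proj p @^-1` [set v]) `&` [set g : {ptws U -> nat} | forall q, q \in l -> g q.1 = q.2]).
  apply: openI => //.
  exact: (proj1 (@continuousP {ptws U -> nat} nat (proj p)) (@proj_continuous U (fun _ => nat) p) _ (discrete_open _)).
apply/seteqP; split => g.
  move=> h; split; first by apply: (h (p, v)); rewrite mem_head.
  by move=> q hq; apply: h; rewrite inE hq orbT.
move=> [/= h1 h2] q; rewrite inE => /orP[/eqP->|]; first exact: h1.
exact: h2.
Qed.

Lemma ptws_open_agree (lp : seq U) (f : U -> nat) :
  open [set g : {ptws U -> nat} | agree lp g f].
Proof.
rewrite (_ : [set g | _] = [set g : {ptws U -> nat} | forall q, q \in [seq (p, f p) | p <- lp] -> g q.1 = q.2]).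
  exact: ptws_open_cyl.
apply/seteqP; split => g /= h.
  by move=> q /mapP [p hp ->] /=; apply: h.
by move=> p hp; apply: (h (p, f p)); apply/mapP; exists p.
Qed.
Lemma dummy_old (lp : seq U) (f : U -> nat) :
  open [set g : {ptws U -> nat} | agree lp g f].
Proof.
elim: lp => [|p lp IH].
  rewrite (_ : [set g | _] = setT); first exact: openT.
  by apply/seteqP; split => // g _ p.
rewrite (_ : [set g | _] = (proj p @^-1` [set f p]) `&` [set g : {ptws U -> nat} | agree lp g f]).
  apply: openI => //.
  exact: (proj1 (@continuousP {ptws U -> nat} nat (proj p)) (@proj_continuous U (fun _ => nat) p) _ (discrete_open _)).
apply/seteqP; split => g.
  move=> h; split; first by apply: h; rewrite mem_head.
  by move=> q hq; apply: h; rewrite inE hq orbT.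
move=> [/= h1 h2] q; rewrite inE => /orP[/eqP->|]; first exact: h1.
exact: h2.
Qed.

End PtwsNat.

Definition tb (G : Gspace) : table_space := set_val G.
Definition cyl (l : seq ((nat * nat) * nat)) : set Gspace :=
  fun G => forall q, q \in l -> tb G q.1 = q.2.
Definition ne l := exists G, cyl l G.

Lemma cyl_cat l1 l2 G : cyl (l1 ++ l2) G <-> cyl l1 G /\ cyl l2 G.
Proof.
split.
  by move=> h; split => q hq; apply: h; rewrite mem_cat hq ?orbT.
by move=> [h1 h2] q; rewrite mem_cat => /orP[] hq; [apply: h1|apply: h2].
Qed.

Lemma cyl_open l : open (cyl l).
Proof.
exists [set g : {ptws (nat * nat) -> nat} | forall q, q \in l -> g q.1 = q.2].
  exact: ptws_open_cyl.
by [].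
Qed.

Lemma cyl_basis (U : set Gspace) G : open U -> U G -> exists l, cyl l G /\ cyl l `<=` U.
Proof.
move=> [V oV <-] /= VG.
have : nbhs (tb G) V by apply: open_nbhs_nbhs; split.
move=> /ptws_nbhs [lp hlp].
exists [seq (p, tb G p) | p <- lp]; split.
  by move=> q /mapP [p _ ->].
move=> G' hG'; apply: hlp => p hp.
by apply: (hG' (p, tb G p)); apply/mapP; exists p.
Qed.

Definition ND (N : set Gspace) :=
  forall l, ne l -> exists l', ne (l ++ l') /\ forall G, cyl (l ++ l') G -> ~ N G.

Lemma ND_nowhere (N : set Gspace) : ND N -> nowhere_dense N.
Proof.
move=> hN; apply/seteqP; split => // G.
rewrite /interior /= nbhsE => -[B [oB BG] BN].
have [l [lG lB]] := cyl_basis oB BG.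
have [l' [[G' hG'] hdis]] := hN l (ex_intro _ G lG).
have : closure N G' by apply: BN; apply: lB; exact: (proj1 (proj1 (cyl_cat _ _ _) hG')).
move=> /(_ (cyl (l ++ l'))) [].
  by apply: open_nbhs_nbhs; split => //; exact: cyl_open.
by move=> z [Nz cz]; case: (hdis z cz).
Qed.

End ChunkA.
Import ChunkA.

Module ChunkB.
Set Implicit Arguments.
Unset Strict Implicit.
Unset Printing Implicit Defensive.
Import Order.TTheory GRing.Theory Num.Theory.
Local Open Scope classical_set_scope.

Definition meag (M : set Gspace) :=
  exists F : nat -> set Gspace, (forall n, ND (F n)) /\ forall G, M G -> exists n, F n G.

Lemma ND_sub (N N' : set Gspace) : (forall G, N' G -> N G) -> ND N -> ND N'.
Proof.
move=> s hN l hl; have [l' [h1 h2]] := hN l hl.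
by exists l'; split => // G /h2 nN /s.
Qed.

Lemma ND0 : ND set0.
Proof. move=> l hl; exists [::]; rewrite cats0; split => // G _ h; exact: h. Qed.

Lemma meag_sub (M M' : set Gspace) : (forall G, M' G -> M G) -> meag M -> meag M'.
Proof. by move=> s [F [h1 h2]]; exists F; split => // G /s /h2. Qed.

Lemma meag_ND N : ND N -> meag N.
Proof. by move=> h; exists (fun _ => N); split => // G NG; exists 0%N. Qed.

Lemma meag0 : meag set0.
Proof. exact: meag_ND ND0. Qed.

Lemma meag_union (I : countType) (M : I -> set Gspace) :
  (forall i, meag (M i)) -> meag (fun G => exists i, M i G).
Proof.
move=> h; have [f hf] := boolp.choice h.
exists (fun k => match @unpickle (I * nat)%type k with Some (i, n) => f i n | None => set0 end).
split.
  move=> k; case: (unpickle k) => [[i n]|]; last exact: ND0.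
  by case: (hf i).
move=> G [i MiG]; have [_ h2] := hf i; have [n hn] := h2 G MiG.
by exists (pickle (i, n)); rewrite pickleK.
Qed.

Lemma meag_U2 (M1 M2 : set Gspace) : meag M1 -> meag M2 -> meag (fun G => M1 G \/ M2 G).
Proof.
move=> h1 h2.
have := @meag_union bool (fun b => if b then M1 else M2).
move=> /(_ (fun b => if b as b' return meag (if b' then M1 else M2) then h1 else h2)).
apply: meag_sub => G [] h; [by exists true|by exists false].
Qed.

Section Souslin.
Variable F : seq nat -> set Gspace.
Hypothesis Fcl : forall s G, ~ F s G -> exists l, cyl l G /\ forall G', cyl l G' -> ~ F s G'.

Definition SA := fun G => exists y : nat -> nat, forall n, F (mkseq y n) G.
Definition SP (s : seq nat) := fun G => exists y : nat -> nat, mkseq y (size s) = s /\ forall n, F (mkseq y n) G.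
Definition SR (Q : set Gspace) := fun G => forall l, cyl l G -> ~ meag (fun G' => cyl l G' /\ Q G').

Lemma QR (Q : set Gspace) : meag (fun G => Q G /\ ~ SR Q G).
Proof.
apply: (@meag_sub (fun G => exists l : seq ((nat * nat) * nat),
    meag (fun G' => cyl l G' /\ Q G') /\ cyl l G /\ Q G)).
  move=> G [QG nR]; move: nR; rewrite /SR => /boolp.existsNP [l].
  move=> /boolp.not_implyP [clG] /boolp.contrapT mg; by exists l; split => //.
apply: meag_union => l.
case: (boolp.pselect (meag (fun G' => cyl l G' /\ Q G'))) => hm.
  by apply: meag_sub hm => G [_ h].
by apply: meag_sub meag0 => G [].
Qed.

Lemma mkseqS (y : nat -> nat) n : mkseq y n.+1 = rcons (mkseq y n) (y n).
Proof. by rewrite /mkseq -addn1 iotaD map_cat cats1. Qed.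

Lemma RF s G : SR (SP s) G -> F s G.
Proof.
move=> hR; apply: boolp.contrapT => nF.
have [l [lG hl]] := Fcl nF.
apply: (hR l lG); apply: meag_sub meag0 => G' [cG' [y [ys hy]]].
by apply: (hl G' cG'); rewrite -ys; apply: hy.
Qed.

Lemma P_split s G : SP s G -> exists k, SP (rcons s k) G.
Proof.
move=> [y [ys hy]]; exists (y (size s)); exists y; split => //.
by rewrite size_rcons mkseqS ys.
Qed.

Definition SC s := fun G => SR (SP s) G /\ forall k, ~ SR (SP (rcons s k)) G.

Lemma C_meag s : meag (SC s).
Proof.
pose clC := fun G => forall l, cyl l G -> exists G', cyl l G' /\ SC s G'.
pose M0 := fun G => exists k : nat, SP (rcons s k) G /\ ~ SR (SP (rcons s k)) G.
have hM0 : meag M0 by apply: meag_union => k; exact: QR.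
pose N := fun G => exists k : nat, clC G /\ SR (SP (rcons s k)) G.
have hN : meag N.
  apply: meag_union => k; apply: meag_ND => l hl.
  case: (boolp.pselect (exists z, cyl l z /\ SC s z)) => [[z [zl [_ zk]]]|nz].
    have := zk k; rewrite /SR => /boolp.existsNP [l'] /boolp.not_implyP [cz] /boolp.contrapT mz.
    exists l'; split; first by exists z; apply/cyl_cat.
    by move=> G /cyl_cat [_ cG] [_ RG]; apply: (RG l' cG).
  exists [::]; rewrite cats0; split => // G lG [cG _].
  have [G' [h1 h2]] := cG l lG; apply: nz; by exists G'.
suff hcl : ND clC.
  by apply: meag_sub (meag_ND hcl) => G CG l lG; exists G.
move=> l [x0 lx0].
case: (boolp.pselect (exists x, cyl l x /\ ~ clC x)) => [[x [lx nx]]|hall].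
  move: nx; rewrite /clC => /boolp.existsNP [l'] /boolp.not_implyP [cx].
  move=> /boolp.forallNP hno.
  exists l'; split; first by exists x; apply/cyl_cat.
  move=> G cG hG; have [G' [cG' CG']] := hG _ cG.
  by apply: (hno G'); split => //; case/cyl_cat: cG'.
exfalso.
have clx0 : clC x0 by apply: boolp.contrapT => h; apply: hall; exists x0.
have [G' [lG' [RG' _]]] := clx0 l lx0.
apply: (RG' l lG'); apply: meag_sub (meag_U2 hM0 hN) => G [lG PG].
have [k Pk] := P_split PG.
case: (boolp.pselect (SR (SP (rcons s k)) G)) => hk.
  right; exists k; split => //.
  by apply: boolp.contrapT => h; apply: hall; exists G.
by left; exists k.
Qed.

Lemma branch G : SR (SP [::]) G -> ~ (exists s, SC s G) -> SA G.
Proof.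
move=> R0 nC.
have step : forall s, exists k, SR (SP s) G -> SR (SP (rcons s k)) G.
  move=> s; case: (boolp.pselect (exists k, SR (SP (rcons s k)) G)) => [[k hk]|hk].
    by exists k.
  exists 0%N => Rs; exfalso; apply: nC; exists s; split => // k Rk.
  by apply: hk; exists k.
have [g hg] := boolp.choice step.
pose S := fix S n := if n is n'.+1 then rcons (S n') (g (S n')) else [::].
have sizeS : forall n, size (S n) = n.
  by elim=> //= n IH; rewrite size_rcons IH.
pose y := fun n => nth 0%N (S n.+1) n.
have mS : forall n, mkseq y n = S n.
  elim=> // n IH; rewrite mkseqS IH /= /y /= nth_rcons sizeS ltnn eqxx.
  by [].
have RS : forall n, SR (SP (S n)) G.
  by elim=> // n IH /=; apply: hg.
by exists y => n; rewrite mS; apply: RF.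
Qed.

Lemma souslin : (forall l, ne l -> ~ meag (fun G => cyl l G /\ ~ SA G)) -> meag SA.
Proof.
move=> hyp.
have AP : forall G, SA G -> SP [::] G.
  by move=> G [y hy]; exists y; split.
have hR : ND (SR (SP [::])).
  move=> l hl.
  case: (boolp.pselect (exists x, cyl l x /\ ~ SR (SP [::]) x)) => [[x [lx nx]]|hall].
    move: nx; rewrite /SR => /boolp.existsNP [l'] /boolp.not_implyP [cx] /boolp.contrapT mx.
    exists l'; split; first by exists x; apply/cyl_cat.
    by move=> G /cyl_cat [_ cG] RG; apply: (RG l' cG).
  exfalso; apply: (hyp l hl).
  apply: (@meag_sub (fun G => exists s : seq nat, SC s G)).
    move=> G [lG nA]; apply: boolp.contrapT => nC; apply: nA; apply: branch => //.
    by apply: boolp.contrapT => h; apply: hall; exists G.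
  by apply: meag_union => s; exact: C_meag.
apply: meag_sub (meag_U2 (QR (SP [::])) (meag_ND hR)) => G AG.
case: (boolp.pselect (SR (SP [::]) G)) => h; [by right|left; split => //; exact: AP].
Qed.

End Souslin.

Lemma zero_one (A : set Gspace) (F : seq nat -> set Gspace)
  (Fcl : forall s G, ~ F s G -> exists l, cyl l G /\ forall G', cyl l G' -> ~ F s G')
  (hA : forall G, A G <-> SA F G)
  (T : forall l1 l2, ne l1 -> ne l2 -> meag (fun G => cyl l1 G /\ ~ A G) ->
      exists l3, ne (l2 ++ l3) /\ meag (fun G => cyl l3 G /\ ~ A G)) :
  meag A \/ meag (~` A).
Proof.
case: (boolp.pselect (exists l1, ne l1 /\ meag (fun G => cyl l1 G /\ ~ A G))) => [[l1 [n1 m1]]|hno].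
  right.
  pose N := fun G => forall l, cyl l G -> ~ meag (fun G' => cyl l G' /\ ~ A G').
  have hN : ND N.
    move=> l2 n2; have [l3 [n3 m3]] := T l1 l2 n1 n2 m1.
    exists l3; split => // G /cyl_cat [_ c3] NG; exact: (NG l3 c3).
  apply: (@meag_sub (fun G => N G \/ exists l : seq ((nat * nat) * nat),
      meag (fun G' => cyl l G' /\ ~ A G') /\ cyl l G /\ ~ A G)).
    move=> G nAG; case: (boolp.pselect (N G)) => hG; [by left|right].
    move: hG; rewrite /N => /boolp.existsNP [l] /boolp.not_implyP [cl] /boolp.contrapT ml.
    by exists l; split.
  apply: meag_U2; first exact: meag_ND.
  apply: meag_union => l.
  case: (boolp.pselect (meag (fun G' => cyl l G' /\ ~ A G'))) => hm.
    by apply: meag_sub hm => G [_ h].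
  by apply: meag_sub meag0 => G [].
left.
apply: (@meag_sub (SA F)); first by move=> G /hA.
apply: souslin => // l nl ml; apply: hno; exists l; split => //.
by apply: meag_sub ml => G [h1 h2]; split => // /hA.
Qed.

Lemma meag_meager (A : set Gspace) : meag A -> meager A.
Proof.
move=> [F [h1 h2]]; exists (fun n => F n `&` A); split.
  move=> n; apply: ND_nowhere; apply: ND_sub (h1 n) => G [].
  by [].
apply/seteqP; split => G.
  by move=> AG; have [n hn] := h2 G AG; exists n.
by move=> [n _ [_ h]].
Qed.

End ChunkB.
Import ChunkB.

Module ChunkC.
Unset Implicit Arguments.
Unset Strict Implicit.
Unset Printing Implicit Defensive.
Import Order.TTheory GRing.Theory Num.Theory.
Local Open Scope classical_set_scope.

Lemma tbG (G : Gspace) : is_group_table (tb G).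
Proof. case: G => g h; exact: (set_mem h). Qed.

Definition mkG (g : table_space) (h : is_group_table g) : Gspace := exist _ g (mem_set h).

Lemma tb_inj (G1 G2 : Gspace) : tb G1 = tb G2 -> G1 = G2.
Proof.
case: G1 G2 => [g1 p1] [g2 p2]; rewrite /tb !set_valE /= => e; subst g2.
by rewrite (Prop_irrelevance p1 p2).
Qed.

Record perm := Perm { pf : nat -> nat; pi : nat -> nat;
  pK : cancel pf pi; piK : cancel pi pf; p0 : pf 0 = 0 }.

Lemma pi0 (s : perm) : pi s 0 = 0.
Proof. by rewrite -{1}(p0 s) pK. Qed.

Definition pinv (s : perm) : perm := Perm (pi s) (pf s) (piK s) (pK s) (pi0 s).

Definition actT (s : perm) (A : table_space) : table_space :=
  fun p => pf s (A (pi s p.1, pi s p.2)).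

Lemma act_group (s : perm) A : is_group_table A -> is_group_table (actT s A).
Proof.
move=> [ha hi hv]; split.
- by move=> x y z; rewrite /actT /= !pK ha.
- by move=> x; rewrite /actT /= pi0 (proj1 (hi _)) (proj2 (hi _)) !piK.
- move=> x; have [y [h1 h2]] := hv (pi s x); exists (pf s y).
  by rewrite /actT /= pK h1 h2 p0.
Qed.

Definition act (s : perm) (G : Gspace) : Gspace := mkG (actT s (tb G)) (act_group s (tb G) (tbG G)).

Lemma tb_act s G p : tb (act s G) p = pf s (tb G (pi s p.1, pi s p.2)).
Proof. by []. Qed.

Lemma act_inv s G : act (pinv s) (act s G) = G.
Proof.
apply: tb_inj; apply: boolp.funext => -[i j].
by rewrite !tb_act /pinv /= !pK.
Qed.

Lemma act_inv' s G : act s (act (pinv s) G) = G.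
Proof.
apply: tb_inj; apply: boolp.funext => -[i j].
by rewrite !tb_act /pinv /= !piK.
Qed.

Definition actl (s : perm) (l : seq ((nat * nat) * nat)) :=
  [seq ((pf s q.1.1, pf s q.1.2), pf s q.2) | q <- l].

Lemma actl_inv s l : actl (pinv s) (actl s l) = l.
Proof.
elim: l => //= -[[i j] v] l IH /=.
by rewrite IH !pK.
Qed.

Lemma actl_cat s l1 l2 : actl s (l1 ++ l2) = actl s l1 ++ actl s l2.
Proof. exact: map_cat. Qed.

Lemma cyl_act s l G : cyl l G -> cyl (actl s l) (act s G).
Proof.
move=> h q /mapP [[[i j] v] hq ->] /=.
by rewrite tb_act /= !pK (h _ hq).
Qed.

Lemma ne_act s l : ne l -> ne (actl s l).
Proof. by move=> [G hG]; exists (act s G); apply: cyl_act. Qed.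

Lemma ND_pre s N : ND N -> ND (fun G => N (act s G)).
Proof.
move=> hN l hl.
have [l'' [[G' hG'] hdis]] := hN _ (ne_act s _ hl).
exists (actl (pinv s) l''); split.
  exists (act (pinv s) G'); apply/cyl_cat; case/cyl_cat: hG' => h1 h2; split.
    by rewrite -(actl_inv s l); apply: cyl_act.
  exact: cyl_act.
move=> G /cyl_cat [h1 h2] NG; apply: (hdis (act s G)) => //.
apply/cyl_cat; split; first exact: cyl_act.
have := cyl_act s _ _ h2; rewrite (_ : actl s (actl (pinv s) l'') = l'') //.
by rewrite -{2}(actl_inv (pinv s) l''); congr actl; case: s.
Qed.

Lemma meag_pre s M : meag M -> meag (fun G => M (act s G)).
Proof.
move=> [F [h1 h2]]; exists (fun n G => F n (act s G)); split.
  by move=> n; apply: ND_pre.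
by move=> G /h2.
Qed.

Lemma inv_meag (A : set Gspace) (hA : forall s G, A G -> A (act s G)) s l :
  meag (fun G => cyl l G /\ ~ A G) -> meag (fun G => cyl (actl s l) G /\ ~ A G).
Proof.
move=> /(meag_pre (pinv s) _); apply: meag_sub => G [h1 h2]; split.
  by rewrite -(actl_inv s l); apply: cyl_act.
move=> /(hA s _); rewrite (_ : act s (act (pinv s) G) = G) //.
exact: act_inv'.
Qed.

Definition sw (u v x : nat) := if x == u then v else if x == v then u else x.

Lemma sw_u u v : sw u v u = v. Proof. by rewrite /sw eqxx. Qed.
Lemma sw_v u v : sw u v v = u. Proof. by rewrite /sw eqxx; case: eqP. Qed.
Lemma sw_o u v x : x != u -> x != v -> sw u v x = x.
Proof. by move=> h1 h2; rewrite /sw (negbTE h1) (negbTE h2). Qed.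

Lemma swK u v : cancel (sw u v) (sw u v).
Proof.
move=> x; case: (eqVneq x u) => [->|xu]; first by rewrite sw_u sw_v.
case: (eqVneq x v) => [->|xv]; first by rewrite sw_v sw_u.
by rewrite !sw_o.
Qed.

Lemma fin_perm (ps : seq (nat * nat)) :
  (forall a b a' b', (a, b) \in ps -> (a', b') \in ps -> (a = a' <-> b = b')) ->
  exists f g : nat -> nat, cancel f g /\ cancel g f /\ forall a b, (a, b) \in ps -> f a = b.
Proof.
elim: ps => [|[a b] ps IH] hyp.
  by exists id, id.
have [f [g [fg [gf hf]]]] : exists f g : nat -> nat, cancel f g /\ cancel g f /\
    forall a b, (a, b) \in ps -> f a = b.
  by apply: IH => a1 b1 a2 b2 h1 h2; apply: hyp; rewrite inE ?h1 ?h2 orbT.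
exists (fun x => sw (f a) b (f x)), (fun x => g (sw (f a) b x)); split; [|split].
- by move=> x /=; rewrite swK fg.
- by move=> x /=; rewrite gf swK.
move=> a' b'; rewrite inE => /orP[/eqP [-> ->]|hin].
  by rewrite /sw eqxx.
rewrite (hf _ _ hin) /sw.
have hin' : (a', b') \in (a, b) :: ps by rewrite inE hin orbT.
have hab := hyp a b a' b' (mem_head _ _) hin'.
case: (eqVneq b' (f a)) => [e|ne1].
  have aa : a = a' by apply: (can_inj fg); rewrite (hf _ _ hin) e.
  by rewrite e; rewrite (proj1 hab aa).
case: (eqVneq b' b) => [e|ne2] //.
by exfalso; move/eqP: ne1; apply; rewrite -(hf _ _ hin) -(proj2 hab (esym e)).
Qed.

Fixpoint labs (l : seq ((nat * nat) * nat)) : seq nat :=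
  if l is q :: l' then q.1.1 :: q.1.2 :: q.2 :: labs l' else [::].

Lemma labsP l i j v : ((i, j), v) \in l -> [/\ i \in labs l, j \in labs l & v \in labs l].
Proof.
elim: l => // q l IH; rewrite inE => /orP[/eqP <-|/IH [h1 h2 h3]] /=.
  by rewrite !inE !eqxx !orbT.
by rewrite !inE h1 h2 h3 !orbT.
Qed.

Definition cto := Cantor.to_nat.
Definition cof := Cantor.of_nat.
Lemma ctoK : cancel cto cof. Proof. exact: Cantor.cancel_of_to. Qed.
Lemma cofK : cancel cof cto. Proof. exact: Cantor.cancel_to_of. Qed.

Lemma transitive l1 l2 : ne l1 -> ne l2 -> exists s : perm, ne (l2 ++ actl s l1).
Proof.
move=> [G1 h1] [G2 h2].
pose T := 0 :: labs l2.
pose S := 0 :: labs l1.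
have [tau [taui [tK [tiK htau]]]] : exists f g : nat -> nat, cancel f g /\ cancel g f /\
   forall a b, (a, b) \in [seq (cto (0, n), n) | n <- T] -> f a = b.
  apply: fin_perm => a b a' b' /mapP [n _ [-> ->]] /mapP [n' _ [-> ->]].
  split; last by move=> ->.
  by move=> e; change (cto (0, n) = cto (0, n')) in e; have := can_inj ctoK e; case.
pose beta x := cof (taui x).
pose betai p := tau (cto p).
have bK : cancel beta betai by move=> x; rewrite /beta /betai cofK tiK.
have biK : cancel betai beta by move=> p; rewrite /beta /betai tK ctoK.
have bT : forall n, n \in T -> beta n = (0, n).
  move=> n hn; rewrite /beta.
  have -> : taui n = cto (0, n).
    have e : tau (cto (0, n)) = n by apply: htau; apply/mapP; exists n.
    by rewrite -{1}e tK.
  by rewrite ctoK.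
have [sf [si [sK [siK hs]]]] : exists f g : nat -> nat, cancel f g /\ cancel g f /\
   forall a b, (a, b) \in [seq (i, betai (i, 0)) | i <- S] -> f a = b.
  apply: fin_perm => a b a' b' /mapP [n _ [-> ->]] /mapP [n' _ [-> ->]].
  split; first by move=> ->.
  by move=> e; have := can_inj biK e; case.
have s0 : sf 0 = 0.
  rewrite (hs 0 (betai (0, 0))); last by apply/mapP; exists 0; rewrite ?mem_head.
  by rewrite -(bT 0 (mem_head _ _)) bK.
pose s := Perm sf si sK siK s0.
exists s.
pose g3 : table_space := fun p => betai (tb G1 ((beta p.1).1, (beta p.2).1), tb G2 ((beta p.1).2, (beta p.2).2)).
have [a1 i1 v1] := tbG G1.
have [a2 i2 v2] := tbG G2.
have b0 : beta 0 = (0, 0) by apply: bT; exact: mem_head.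
have g3G : is_group_table g3.
  split.
  - by move=> x y z; rewrite /g3 /= !biK /= a1 a2.
  - move=> x; rewrite /g3 /= b0 /= (proj1 (i1 _)) (proj1 (i2 _)) (proj2 (i1 _)) (proj2 (i2 _)).
    by rewrite -surjective_pairing bK.
  - move=> x; have [y1 [e1 f1]] := v1 (beta x).1; have [y2 [e2 f2]] := v2 (beta x).2.
    exists (betai (y1, y2)); rewrite /g3 /= biK /= e1 e2 f1 f2.
    by rewrite -b0 bK.
exists (mkG g3 g3G); apply/cyl_cat; split.
  move=> [[i j] v] hq /=; have [hi hj hv] := labsP _ _ _ _ hq.
  rewrite /tb /mkG set_valE /= /g3 /= (bT i) ?inE ?hi ?orbT // (bT j) ?inE ?hj ?orbT //=.
  rewrite (proj1 (i1 _)) (h2 _ hq) /= -(bT v) ?inE ?hv ?orbT //.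
move=> q /mapP [[[i j] v] hq ->] /=; have [hi hj hv] := labsP _ _ _ _ hq.
have hS : forall k, k \in labs l1 -> sf k = betai (k, 0).
  by move=> k hk; apply: hs; apply/mapP; exists k; rewrite ?inE ?hk ?orbT.
rewrite /tb /mkG set_valE /= /g3 /= (hS i hi) (hS j hj) (hS v hv) !biK /=.
by rewrite (proj1 (i2 _)) (h1 _ hq).
Qed.

End ChunkC.
Import ChunkC.

Module ChunkD.
Unset Implicit Arguments.
Import Order.TTheory GRing.Theory Num.Theory.
Local Open Scope classical_set_scope.

Section Emb.
Variables (H : Type) (mul : H -> H -> H).

Lemma E_inv s G : E_set mul G -> E_set mul (act s G).
Proof.
move=> [phi [pinj phom]]; exists (fun h => pf s (phi h)); split.
  by move=> a b /(can_inj (pK s)) /pinj.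
move=> a b; rewrite phom.
have h := tb_act s G (pf s (phi a), pf s (phi b)); rewrite /= !pK in h; exact: (esym h).
Qed.

Variable e : nat -> H.
Hypothesis esurj : forall h, exists m, e m = h.

Definition FE (s : seq nat) : set Gspace := fun G =>
  forall m n k, (m < size s)%N -> (n < size s)%N -> (k < size s)%N ->
    (nth 0 s m = nth 0 s n <-> e m = e n) /\
    (mul (e m) (e n) = e k -> tb G (nth 0 s m, nth 0 s n) = nth 0 s k).

Lemma FE_cl s G : ~ FE s G -> exists l, cyl l G /\ forall G', cyl l G' -> ~ FE s G'.
Proof.
move=> /boolp.existsNP [m] /boolp.existsNP [n] /boolp.existsNP [k].
move=> /boolp.not_implyP [hm] /boolp.not_implyP [hn] /boolp.not_implyP [hk] hno.
case: (boolp.pselect (nth 0 s m = nth 0 s n <-> e m = e n)) => h1.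
  have h2 : ~ (mul (e m) (e n) = e k -> tb G (nth 0 s m, nth 0 s n) = nth 0 s k).
    by move=> h2; apply: hno; split.
  exists [:: ((nth 0 s m, nth 0 s n), tb G (nth 0 s m, nth 0 s n))]; split.
    by move=> q; rewrite inE => /eqP ->.
  move=> G' hG' hF; apply: h2 => he.
  have := hG' _ (mem_head _ _); rewrite /= => <-.
  by apply: (proj2 (hF m n k hm hn hk)).
exists [::]; split => // G' _ hF; apply: h1; exact: (proj1 (hF m n k hm hn hk)).
Qed.

Lemma E_SA G : E_set mul G <-> SA FE G.
Proof.
split.
  move=> [phi [pinj phom]]; exists (fun m => phi (e m)) => N m n k hm hn hk.
  rewrite size_mkseq in hm hn hk; rewrite !nth_mkseq //; split.
    by split => [/pinj|->].
  by move=> <-; rewrite phom.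
move=> [y hy].
have [idx hidx] := boolp.choice esurj.
have key : forall m n k, (y m = y n <-> e m = e n) /\
    (mul (e m) (e n) = e k -> tb G (y m, y n) = y k).
  move=> m n k; have := hy (m + n + k).+1 m n k.
  rewrite size_mkseq !nth_mkseq; try lia.
  move=> h; apply: h; lia.
exists (fun h => y (idx h)); split.
  move=> a b eab; rewrite -(hidx a) -(hidx b).
  exact: (proj1 (proj1 (key (idx a) (idx b) 0%N)) eab).
move=> a b.
symmetry; apply: (proj2 (key (idx a) (idx b) (idx (mul a b)))).
by rewrite !hidx.
Qed.

Lemma E_dich : meag (E_set mul) \/ meag (~` E_set mul).
Proof.
apply: (zero_one FE_cl E_SA).
move=> l1 l2 n1 n2 m1.
have [s hs] := transitive l1 l2 n1 n2.
exists (actl s l1); split => //.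
apply: inv_meag => // s' G'; exact: E_inv.
Qed.

End Emb.

End ChunkD.
Import ChunkD.

Module ChunkE.
Unset Implicit Arguments.
Import Order.TTheory GRing.Theory Num.Theory.
Local Open Scope classical_set_scope.
Local Open Scope ring_scope.

Definition Baire := {ptws nat -> nat}.
Notation R := Rdefinitions.R.

Definition mm (x y : nat -> nat) : nat :=
  xget 0%N [set k | x k <> y k /\ forall i, (i < k)%N -> x i = y i].

Lemma mmP (x y : nat -> nat) : x <> y ->
  x (mm x y) <> y (mm x y) /\ forall i, (i < mm x y)%N -> x i = y i.
Proof.
move=> nxy; apply: (@xgetPex _ 0%N [set k | x k <> y k /\ forall i, (i < k)%N -> x i = y i]).
have [k hk] : exists k, x k != y k.
  apply: boolp.contrapT => h; apply: nxy; apply: boolp.funext => k.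
  by apply/eqP; apply: boolp.contrapT => hk; apply: h; exists k; apply/negP.
case: (ex_minnP (ex_intro (fun k => x k != y k) k hk)) => m hm hmin.
exists m; split; first by apply/eqP.
move=> i hi; apply/eqP; apply: boolp.contrapT => /negP hne.
by have := hmin i hne; rewrite leqNgt hi.
Qed.

Lemma mmC x y : mm x y = mm y x.
Proof.
rewrite /mm; congr xget; apply/seteqP; split => k /= [h1 h2]; split.
- by move=> e; apply: h1.
- by move=> i /h2.
- by move=> e; apply: h1.
- by move=> i /h2.
Qed.

Definition dist (x y : Baire) : R :=
  if boolp.pselect (x = y) is left _ then 0 else ((mm x y).+1%:R)^-1.

Lemma dist_lt (n : nat) (x y : Baire) :
  dist x y < (n.+1%:R)^-1 <-> forall i, (i <= n)%N -> x i = y i.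
Proof.
rewrite /dist; case: boolp.pselect => [->|nxy].
  by split => // _; rewrite invr_gt0 ltr0n.
have [h1 h2] := mmP x y nxy.
rewrite ltf_pV2 ?posrE ?ltr0n // ltr_nat ltnS; split.
  by move=> hn i hi; apply: h2; apply: leq_ltn_trans hi hn.
move=> h; rewrite ltnNge; apply/negP => hm; apply: h1; exact: h.
Qed.

Lemma dist_ge0 x y : 0 <= dist x y.
Proof. by rewrite /dist; case: boolp.pselect => // _; rewrite invr_ge0 ler0n. Qed.

Lemma dist_eq0 x y : dist x y = 0 <-> x = y.
Proof.
rewrite /dist; case: boolp.pselect => [->//|nxy]; split => // h.
by move: h => /eqP; rewrite invr_eq0 pnatr_eq0.
Qed.

Lemma distC x y : dist x y = dist y x.
Proof.
rewrite /dist; case: boolp.pselect => [->|nxy]; case: boolp.pselect => //.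
  by move=> h; exfalso; apply: nxy.
by move=> _; rewrite mmC.
Qed.

Lemma distD x y z : dist x z <= dist x y + dist y z.
Proof.
case: (boolp.pselect (x = z)) => [->|nxz].
  by rewrite (proj2 (dist_eq0 z z) erefl) addr_ge0 // dist_ge0.
case: (boolp.pselect (x = y)) => [->|nxy].
  by rewrite (proj2 (dist_eq0 y y) erefl) add0r.
case: (boolp.pselect (y = z)) => [<-|nyz].
  by rewrite (proj2 (dist_eq0 y y) erefl) addr0.
have [a1 a2] := mmP x y nxy.
have [b1 b2] := mmP y z nyz.
have [c1 c2] := mmP x z nxz.
rewrite /dist; do 3 case: boolp.pselect => //.
move=> _ _ _.
have hmin : (minn (mm x y) (mm y z) <= mm x z)%N.
  rewrite leqNgt; apply/negP => hlt; apply: c1.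
  rewrite a2; last by apply: leq_trans hlt (geq_minl _ _).
  by rewrite b2 //; apply: leq_trans hlt (geq_minr _ _).
case: (leqP (mm x y) (mm y z)) => hab.
  move: hmin; rewrite (minn_idPl hab) => hmin.
  apply: le_trans (_ : ((mm x y).+1%:R)^-1 <= _).
    by rewrite lef_pV2 ?posrE ?ltr0n // ler_nat ltnS.
  by rewrite lerDl invr_ge0 ler0n.
move: hmin; rewrite (minn_idPr (ltnW hab)) => hmin.
apply: le_trans (_ : ((mm y z).+1%:R)^-1 <= _).
  by rewrite lef_pV2 ?posrE ?ltr0n // ler_nat ltnS.
by rewrite lerDr invr_ge0 ler0n.
Qed.

Definition bnd (lp : seq nat) : nat := foldr maxn 0%N lp.
Lemma bndP lp p : p \in lp -> (p <= bnd lp)%N.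
Proof.
elim: lp => // q lp IH; rewrite inE => /orP[/eqP ->|/IH h] /=.
  exact: leq_maxl.
exact: leq_trans h (leq_maxr _ _).
Qed.

Lemma exists_n (e : R) : 0 < e -> exists n : nat, (n.+1%:R)^-1 < e.
Proof.
move=> e0; exists (Num.truncn (e^-1)).
rewrite invf_plt ?posrE ?ltr0n //; exact: truncnS_gt.
Qed.

Lemma dist_open (U : set Baire) : open U <->
  (forall x, U x -> exists2 e : R, 0 < e & forall y, dist x y < e -> U y).
Proof.
split.
  move=> oU x Ux.
  have : nbhs x U by apply: open_nbhs_nbhs; split.
  move=> /ptws_nbhs [lp hlp].
  exists (((bnd lp).+1%:R)^-1); first by rewrite invr_gt0 ltr0n.
  move=> y /dist_lt h; apply: hlp => p hp; apply/esym/h; exact: bndP.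
move=> h; rewrite openE => x Ux.
have [e e0 he] := h x Ux.
have [n hn] := exists_n e e0.
rewrite /interior /=.
have : nbhs x [set g : Baire | agree (iota 0 n.+1) g x].
  apply: open_nbhs_nbhs; split; first exact: ptws_open_agree.
  by [].
apply: filterS => y hy; apply: he; apply: lt_trans hn.
apply/dist_lt => i hi; apply/esym/hy; rewrite mem_iota /=; lia.
Qed.

Lemma dist_complete (u : nat -> Baire) :
  (forall e : R, 0 < e ->
     exists N, forall m n, (N <= m)%N -> (N <= n)%N -> dist (u m) (u n) < e) ->
  exists x, forall e : R, 0 < e ->
     exists N, forall n, (N <= n)%N -> dist (u n) x < e.
Proof.
move=> hc.
have [Nf hN] := boolp.choice (fun i : nat => hc ((i.+1%:R)^-1) ltac:(by rewrite invr_gt0 ltr0n)).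
exists (fun i => u (Nf i) i) => e e0.
have [L hL] := exists_n e e0.
exists (Nf L) => n hn; apply: lt_trans hL; apply/dist_lt => i hi.
pose M := maxn (Nf i) (Nf L).
have := proj1 (dist_lt _ _ _) (hN L n M hn (leq_maxr _ _)) i hi => ->.
exact: (proj1 (dist_lt _ _ _) (hN i M (Nf i) (leq_maxl _ _) (leqnn _)) i (leqnn _)).
Qed.

Lemma Baire_polish : polish Baire.
Proof.
split.
  exists ((fun s : seq nat => (fun n => nth 0%N s n) : Baire) @` setT); split.
    apply: card_le_trans (card_image_le _ _) _; exact: countableP.
  apply/seteqP; split => // x _ B /ptws_nbhs [lp hlp].
  exists (fun n => nth 0%N (mkseq x (bnd lp).+1) n); split.
    by exists (mkseq x (bnd lp).+1).
  apply: hlp => p hp; rewrite nth_mkseq // ltnS; exact: bndP.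
exists dist; split.
- move=> x y; split; [exact: dist_ge0|exact: dist_eq0].
- exact: distC.
- exact: distD.
- exact: dist_open.
- exact: dist_complete.
Qed.

End ChunkE.
Import ChunkE.

Module ChunkF.
Unset Implicit Arguments.
Import Order.TTheory GRing.Theory Num.Theory.
Local Open Scope classical_set_scope.

Definition ldf (F : Baire -> nat) :=
  forall x : Baire, exists lp, forall y : Baire, agree lp y x -> F y = F x.
Definition lds (S : Baire -> Prop) :=
  forall x : Baire, exists lp, forall y : Baire, agree lp y x -> (S y <-> S x).

Lemma agree_cat (l1 l2 : seq nat) (y x : nat -> nat) :
  agree (l1 ++ l2) y x -> agree l1 y x /\ agree l2 y x.
Proof. by move=> h; split => p hp; apply: h; rewrite mem_cat hp ?orbT. Qed.

Lemma ldf_cst c : ldf (fun _ => c).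
Proof. by move=> x; exists [::]. Qed.

Lemma ldf_coord (F : Baire -> nat) : ldf F -> ldf (fun x => x (F x)).
Proof.
move=> hF x; have [lp hlp] := hF x; exists (F x :: lp) => y hy.
have hy' : agree lp y x by move=> p hp; apply: hy; rewrite inE hp orbT.
by rewrite (hlp y hy'); apply: hy; exact: mem_head.
Qed.

Lemma ldf2 (h : nat -> nat -> nat) (F1 F2 : Baire -> nat) :
  ldf F1 -> ldf F2 -> ldf (fun x => h (F1 x) (F2 x)).
Proof.
move=> h1 h2 x; have [l1 k1] := h1 x; have [l2 k2] := h2 x.
exists (l1 ++ l2) => y /agree_cat [a1 a2]; by rewrite (k1 y a1) (k2 y a2).
Qed.

Lemma lds_eq (F1 F2 : Baire -> nat) : ldf F1 -> ldf F2 -> lds (fun x => F1 x = F2 x).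
Proof.
move=> h1 h2 x; have [l1 k1] := h1 x; have [l2 k2] := h2 x.
exists (l1 ++ l2) => y /agree_cat [a1 a2]; by rewrite (k1 y a1) (k2 y a2).
Qed.

Lemma lds_cst (P : Prop) : lds (fun _ => P).
Proof. by move=> x; exists [::]. Qed.

Lemma lds_op (op : Prop -> Prop -> Prop) (S T : Baire -> Prop) :
  lds S -> lds T -> lds (fun x => op (S x) (T x)).
Proof.
move=> h1 h2 x; have [l1 k1] := h1 x; have [l2 k2] := h2 x.
exists (l1 ++ l2) => y /agree_cat [a1 a2].
by rewrite (boolp.propext (k1 y a1)) (boolp.propext (k2 y a2)).
Qed.

Lemma lds_open (S : Baire -> Prop) : lds S -> open (S : set Baire).
Proof.
move=> hS; rewrite openE => x Sx.
have [lp hlp] := hS x.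
have : nbhs x [set g : Baire | agree lp g x].
  by apply: open_nbhs_nbhs; split; [exact: ptws_open_agree|].
by apply: filterS => y /hlp ->.
Qed.

Lemma lds_borel (S : Baire -> Prop) : lds S -> borel_set (S : set Baire).
Proof.
move=> hS.
have hC : lds (fun x => ~ S x) by apply: (lds_op (fun P _ => ~ P) S S).
have := @sigma_algebraCD Baire setT [set U : set Baire | open U] _
   (@sub_sigma_algebra Baire setT [set U : set Baire | open U] _ (lds_open _ hC)).
rewrite /borel_set; congr (<<s _ >> _).
apply/seteqP; split => x.
  by move=> [_ /boolp.contrapT].
by move=> Sx; split => // h; apply: h.
Qed.

Lemma borel_forall (S : nat -> Baire -> Prop) :
  (forall n, borel_set (S n : set Baire)) -> borel_set ((fun x => forall n, S n x) : set Baire).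
Proof.
move=> h.
have := @sigma_algebraCD Baire setT [set U : set Baire | open U] _
  (@sigma_algebra_bigcup Baire setT [set U : set Baire | open U] (fun n => setT `\` (S n : set Baire))
     (fun n => @sigma_algebraCD Baire setT [set U : set Baire | open U] _ (h n))).
rewrite /borel_set; congr (<<s _ >> _).
apply/seteqP; split => x.
  move=> [_ hn] n; apply: boolp.contrapT => nS; apply: hn; exists n => //.
move=> hx; split => // -[n _ [_ nS]]; exact: nS (hx n).
Qed.

Lemma borel_exists (S : nat -> Baire -> Prop) :
  (forall n, borel_set (S n : set Baire)) -> borel_set ((fun x => exists n, S n x) : set Baire).
Proof.
move=> h; have := @sigma_algebra_bigcup Baire setT [set U : set Baire | open U] (fun n => S n : set Baire) h.
rewrite /borel_set; congr (<<s _ >> _).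
by apply/seteqP; split => x [n hn]; exists n.
Qed.

Lemma borel_and (S T : Baire -> Prop) :
  borel_set (S : set Baire) -> borel_set (T : set Baire) ->
  borel_set ((fun x => S x /\ T x) : set Baire).
Proof.
move=> h1 h2.
have := borel_forall (fun n => if n is 0%N then S else T) (fun n => if n is 0%N as n' return borel_set ((if n' is 0%N then S else T) : set Baire) then h1 else h2).
congr borel_set; apply/seteqP; split => x.
  by move=> h; split; [exact: (h 0%N)|exact: (h 1%N)].
by move=> [hS hT] [|n].
Qed.

Lemma lds_iff (S T : Baire -> Prop) : lds S -> lds T -> lds (fun x => S x <-> T x).
Proof. exact: (lds_op iff). Qed.
Lemma lds_imp (S T : Baire -> Prop) : lds S -> lds T -> lds (fun x => S x -> T x).
Proof. exact: (lds_op (fun P Q => P -> Q)). Qed.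
Lemma lds_and (S T : Baire -> Prop) : lds S -> lds T -> lds (fun x => S x /\ T x).
Proof. exact: (lds_op and). Qed.

Definition cd (t : ((nat * nat) + nat)%type) : nat := pickle t.
Definition tab (x : Baire) : table_space := fun p => x (cd (inl p)).
Definition psi (x : Baire) (m : nat) : nat := x (cd (inr m)).

Lemma ldf_tab (F1 F2 : Baire -> nat) : ldf F1 -> ldf F2 -> ldf (fun X => tab X (F1 X, F2 X)).
Proof.
move=> h1 h2; apply: (ldf_coord (fun X => cd (inl (F1 X, F2 X)))).
exact: (ldf2 (fun a b => cd (inl (a, b)))).
Qed.
Lemma ldf_psi (F : Baire -> nat) : ldf F -> ldf (fun X => psi X (F X)).
Proof.
move=> h; apply: (ldf_coord (fun X => cd (inr (F X)))).
exact: (ldf2 (fun a _ => cd (inr a)) F F).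
Qed.

Ltac ldf_tac := repeat first [ apply: ldf_tab | apply: ldf_psi | apply: ldf_cst ].

Lemma borel_gt : borel_set ((fun X => is_group_table (tab X)) : set Baire).
Proof.
have h1 : borel_set ((fun X : Baire => forall a b c : nat,
     tab X (tab X (a, b), c) = tab X (a, tab X (b, c))) : set Baire).
  apply: borel_forall => a; apply: borel_forall => b; apply: borel_forall => c.
  by apply: lds_borel; apply: lds_eq; ldf_tac.
have h2 : borel_set ((fun X : Baire => forall a : nat,
     tab X (0%N, a) = a /\ tab X (a, 0%N) = a) : set Baire).
  apply: borel_forall => a; apply: lds_borel; apply: lds_and; apply: lds_eq; ldf_tac.
have h3 : borel_set ((fun X : Baire => forall a : nat, exists b : nat,
     tab X (a, b) = 0%N /\ tab X (b, a) = 0%N) : set Baire).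
  apply: borel_forall => a; apply: borel_exists => b.
  apply: lds_borel; apply: lds_and; apply: lds_eq; ldf_tac.
have := borel_and _ _ h1 (borel_and _ _ h2 h3).
congr borel_set; apply/seteqP; split => X.
  by move=> [p [q r]]; split.
by move=> [p q r]; split.
Qed.

Definition xor_tab : table_space := fun p => Nat.lxor p.1 p.2.
Lemma xor_group : is_group_table xor_tab.
Proof.
split.
- by move=> x y z; rewrite /xor_tab /= PeanoNat.Nat.lxor_assoc.
- by move=> x; rewrite /xor_tab /= PeanoNat.Nat.lxor_0_l PeanoNat.Nat.lxor_0_r.
- by move=> x; exists x; rewrite /xor_tab /= PeanoNat.Nat.lxor_nilpotent.
Qed.

Definition fB (x : Baire) : Gspace :=
  match boolp.pselect (is_group_table (tab x)) with
  | left h => exist _ (tab x) (mem_set h)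
  | right _ => exist _ xor_tab (mem_set xor_group)
  end.

Lemma tb_fB x : is_group_table (tab x) -> tb (fB x) = tab x.
Proof. by rewrite /fB; case: boolp.pselect. Qed.

Lemma fB_cont (B : set Baire) : (forall x, B x -> is_group_table (tab x)) ->
  {within B, continuous fB}.
Proof.
move=> hB; apply/subspace_continuousP => x Bx W.
rewrite nbhsE => -[V [oV Vx] VW].
have [l [lx lV]] := cyl_basis oV Vx.
rewrite nbhs_simpl /=.
have : nbhs x [set g : Baire | agree [seq cd (inl q.1) | q <- l] g x].
  by apply: open_nbhs_nbhs; split; [exact: ptws_open_agree|].
apply: filterS => y hy By; apply: VW; apply: lV => q hq.
rewrite tb_fB; last exact: hB.
rewrite -(lx q hq) tb_fB; last exact: hB.
by rewrite /tab hy //; apply/mapP; exists q.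
Qed.

Section Image.
Variables (H : Type) (mul : H -> H -> H) (e : nat -> H).
Hypothesis esurj : forall h, exists m, e m = h.

Definition Bset : set Baire := fun x => is_group_table (tab x) /\
  (forall m n, psi x m = psi x n <-> e m = e n) /\
  (forall m n k, mul (e m) (e n) = e k -> tab x (psi x m, psi x n) = psi x k).

Lemma Bset_borel : borel_set Bset.
Proof.
apply: borel_and; first exact: borel_gt.
apply: borel_and.
  apply: borel_forall => m; apply: borel_forall => n.
  by apply: lds_borel; apply: lds_iff; [apply: lds_eq; ldf_tac|apply: lds_cst].
apply: borel_forall => m; apply: borel_forall => n; apply: borel_forall => k.
by apply: lds_borel; apply: lds_imp; [apply: lds_cst|apply: lds_eq; ldf_tac].
Qed.

Lemma Bset_image : fB @` Bset = E_set mul.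
Proof.
have [idx hidx] := boolp.choice esurj.
apply/seteqP; split => G.
  move=> [x [gx [h1 h2]] <-].
  exists (fun h => psi x (idx h)); split.
    by move=> a b /h1; rewrite !hidx.
  move=> a b.
  have := h2 (idx a) (idx b) (idx (mul a b)); rewrite !hidx => /(_ erefl) <-.
  by have := tb_fB x gx; rewrite /tb => ->.
move=> [phi [pinj phom]].
pose x : Baire := fun n => match @unpickle ((nat * nat) + nat)%type n with
  | Some (inl p) => tb G p | Some (inr m) => phi (e m) | None => 0%N end.
have tx : tab x = tb G by apply: boolp.funext => p; rewrite /tab /x /cd pickleK.
have px : forall m, psi x m = phi (e m) by move=> m; rewrite /psi /x /cd pickleK.
have gx : is_group_table (tab x) by rewrite tx; exact: tbG.
exists x.
  split => //; split.
    by move=> m n; rewrite !px; split => [/pinj|->].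
  by move=> m n k hk; rewrite tx !px -hk phom.
by apply: tb_inj; rewrite tb_fB.
Qed.

End Image.

End ChunkF.
Import ChunkF.

Local Open Scope classical_set_scope.
Theorem theorem5p7 (H : Type) (mul : H -> H -> H) (one : H) (inv : H -> H) :
  is_group mul one inv ->
  analytic (E_set mul) /\ (meager (E_set mul) \/ comeager (E_set mul)).
Proof.
move=> _.
case: (boolp.pselect (exists G, E_set mul G)) => [[G0 [phi0 [pinj0 _]]]|hE].
  have : forall n, exists h, (exists h', phi0 h' = n) -> phi0 h = n.
    move=> n; case: (boolp.pselect (exists h', phi0 h' = n)) => [[h' hh]|nh].
      by exists h'.
    by exists one.
  move=> /boolp.choice [e he].
  have esurj : forall h, exists m, e m = h.
    by move=> h; exists (phi0 h); apply: pinj0; apply: he; exists h.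
  split.
    exists {ptws nat -> nat}, (Bset H mul e), fB; split.
    - exact: Baire_polish.
    - exact: Bset_borel.
    - by apply: fB_cont => x [].
    - exact: Bset_image.
  by case: (E_dich H mul e esurj) => h; [left|right]; apply: meag_meager.
split.
  exists {ptws nat -> nat}, set0, fB; split.
  - exact: Baire_polish.
  - exact: sigma_algebra0.
  - by apply: fB_cont.
  - rewrite image_set0; apply/seteqP; split => // G hG; apply: hE; by exists G.
left; apply: meag_meager; apply: meag_sub meag0 => G hG; apply: hE; by exists G.
Qed.
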